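(* Let $C$ be a set of concepts over $\{0,1\}^n$, let $S\subseteq\{0,1\}^n$ with $|S|=d$ be a set shattered by $C$. Let $\mathcal{N}$ be a quantum network with quantum membership oracle gates such that for every $c\in C$, if the oracle gates of $\mathcal{N}$ are $QMQ_c$ gates, then with probability at least $2/3$ the output of $\mathcal{N}$ is a representation of a Boolean circuit $h$ whose relative distance from $c$ on $S$ is at most $1/10$. Then the query complexity of $\mathcal{N}$ is at least $\frac{d}{12n}$.
   Context: A set $S\subseteq\{0,1\}^n$ is shattered by $C$ if for every $U\subseteq S$ there is $c\in C$ with $\{x\in S: c(x)=1\}=U$. The relative distance of Boolean functions $h$ and $c$ on $S$ is the fraction of points of $S$ on which they disagree. A quantum network on an $m$-qubit register is a sequence $U_0,O_1,U_1,\dots,O_T,U_T$ of unitaries applied to $|0^m\rangle$, the $U_i$ arbitrary fixed unitaries and each $O_i$ an oracle gate, followed by a computational-basis measurement of some qubits whose outcome is the output; $T$ is the query complexity. The gate $QMQ_c$ maps basis state $|x,b,y\rangle$ ($x\in\{0,1\}^n$, $b\in\{0,1\}$) to $|x,b\oplus c(x),y\rangle$. *)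

(* Defs.v *)
From HB Require Import structures.
From mathcomp Require Import all_boot all_order all_algebra.
From mathcomp Require Import complex.
From mathcomp Require Import reals.
Set Implicit Arguments. Unset Strict Implicit. Unset Printing Implicit Defensive.
Import Order.TTheory GRing.Theory Num.Theory.
Local Open Scope ring_scope.

Definition point (n : nat) := {ffun 'I_n -> bool}.
Definition boolfun (n : nat) := {ffun point n -> bool}.

Definition shattered (n : nat) (C : {set boolfun n}) (S : {set point n}) :=
  forall U : {set point n}, U \subset S ->
    exists2 c, c \in C & [set x in S | c x] = U.

Definition rel_dist (R : realType) (n : nat) (S : {set point n}) (h c : boolfun n) : R :=
  #|[set x in S | h x != c x]|%:R / #|S|%:R.

(* Register of m = n + 1 + k qubits: qubits 0..n-1 hold x, qubit n holds b,
   the remaining k qubits hold y.  Basis states are bit strings. *)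
Definition qreg (n k : nat) := (n.+1 + k)%N.
Definition basis (n k : nat) := {ffun 'I_(qreg n k) -> bool}.
Definition dimH (n k : nat) := #|{: basis n k}|.

Definition bidx (n k : nat) (z : basis n k) : 'I_(dimH n k) := enum_rank z.

Section Q.
Variable R : realType.
Local Notation C := (R[i]).

Definition unitary (N : nat) (U : 'M[C]_N) : Prop :=
  U *m (map_mx (fun z : C => z^*) U)^T = 1%:M.

Definition xpart (n k : nat) (z : basis n k) : point n :=
  [ffun i : 'I_n => z (lshift k (widen_ord (leqnSn n) i))].

Definition bqubit (n k : nat) : 'I_(qreg n k) := lshift k (@ord_max n).

Definition qmq_basis (n k : nat) (c : boolfun n) (z : basis n k) : basis n k :=
  [ffun i => if i == bqubit n k then z i (+) c (xpart z) else z i].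

Definition QMQ (n k : nat) (c : boolfun n) : 'M[C]_(dimH n k) :=
  \matrix_(i, j) (if enum_val i == qmq_basis c (enum_val j) then 1 else 0).

Definition ket0 (n k : nat) : 'cV[C]_(dimH n k) :=
  \col_i (if enum_val i == [ffun=> false] then 1 else 0).

Fixpoint run (n k : nat) (Us : nat -> 'M[C]_(dimH n k)) (O : 'M[C]_(dimH n k))
  (t : nat) : 'cV[C]_(dimH n k) :=
  match t with
  | 0 => Us 0%N *m ket0 n k
  | t'.+1 => Us t *m (O *m run Us O t')
  end.

(* Outcome of measuring the qubits in M on basis state z (unmeasured qubits
   are reported as 0, i.e. the outcome is z restricted to M). *)
Definition outcome (n k : nat) (M : {set 'I_(qreg n k)}) (z : basis n k) : basis n k :=
  [ffun i => (i \in M) && z i].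

Definition success_prob (n k : nat) (Us : nat -> 'M[C]_(dimH n k)) (T : nat)
  (M : {set 'I_(qreg n k)}) (decode : basis n k -> option (boolfun n))
  (O : 'M[C]_(dimH n k)) (good : boolfun n -> bool) : C :=
  \sum_(z : basis n k)
     (if decode (outcome M z) is Some h then
        (if good h then `|run Us O T (bidx z) 0| ^+ 2 else 0)
      else 0).
End Q.

(* Main.v *)
Require Import Defs.
From HB Require Import structures.
From mathcomp Require Import all_boot all_order all_algebra.
From mathcomp Require Import complex.
From mathcomp Require Import reals.
From mathcomp Require Import ring lra zify.
Import Order.TTheory GRing.Theory Num.Theory.
Local Open Scope ring_scope.

Lemma rank_sum (F : fieldType) m p (I : finType) (P : pred I) (A : I -> 'M[F]_(m, p)) :
  (\rank (\sum_(i | P i) A i)%R <= \sum_(i | P i) \rank (A i))%N.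
Proof.
apply: (big_ind2 (fun M k => \rank M <= k)%N).
- by rewrite mxrank0.
- move=> M1 k1 M2 k2 h1 h2; apply: leq_trans (mxrank_add _ _) _; exact: leq_add.
- by move=> i _.
Qed.

Section QS.
Variables (R : realType) (n k : nat).
Local Notation C := (R[i]).
Local Notation dim := (dimH n k).

Definition cst (b : bool) : boolfun n := [ffun _ => b].

Lemma qmq_basis_split (c : boolfun n) (z : basis n k) :
  qmq_basis c z = qmq_basis (cst (c (xpart z))) z.
Proof. by apply/ffunP => i; rewrite !ffunE. Qed.

Definition Qx (x : point n) : 'M[C]_dim :=
  \matrix_(i, j) (if xpart (enum_val j) == x then @QMQ R n k (cst true) i j - @QMQ R n k (cst false) i j else 0).

Lemma QMQ_dec (c : boolfun n) :
  @QMQ R n k c = @QMQ R n k (cst false) + \sum_x (c x)%:R *: Qx x.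
Proof.
apply/matrixP => i j; rewrite !mxE summxE.
rewrite (bigD1 (xpart (enum_val j))) //= big1; last first.
  by move=> x /negbTE hx; rewrite !mxE eq_sym hx mulr0.
rewrite !mxE eqxx addr0 qmq_basis_split.
by case: (c (xpart (enum_val j))); rewrite ?mul1r ?mul0r ?addr0 // addrC subrK.
Qed.

Variables (Us : nat -> 'M[C]_dim) (N : nat) (cs : 'I_N -> boolfun n).

Definition Amp t : 'M[C]_(N, dim) := \matrix_(a, j) run Us (@QMQ R n k (cs a)) t j 0.

Lemma AmpM t (M : 'M[C]_dim) a j :
  (Amp t *m M^T) a j = (M *m run Us (@QMQ R n k (cs a)) t) j 0.
Proof. by rewrite !mxE; apply: eq_bigr => l _; rewrite !mxE mulrC. Qed.

Lemma Amp_step t :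
  Amp t.+1 = Amp t *m (Us t.+1 *m @QMQ R n k (cst false))^T +
    \sum_x diag_mx (\row_a ((cs a x)%:R : C)) *m Amp t *m (Us t.+1 *m Qx x)^T.
Proof.
apply/matrixP => a j.
rewrite [LHS]mxE /=.
set v := run Us _ t.
rewrite QMQ_dec mulmxDl mulmxDr [in RHS]mxE AmpM mulmxA mxE.
congr (_ + _).
rewrite mulmx_suml mulmx_sumr !summxE; apply: eq_bigr => x _.
rewrite -scalemxAl -scalemxAr mxE mulmxA.
rewrite -[in RHS]mulmxA mul_diag_mx mxE mxE AmpM !mxE.
by [].
Qed.

Lemma Amp_rank t : (\rank (Amp t) <= (#|point n|.+1) ^ t)%N.
Proof.
elim: t => [|t IH].
  have -> : Amp 0 = (\col_(a < N) (1 : C)) *m (\row_j (Us 0 *m @ket0 R n k) j 0).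
    by apply/matrixP => a j; rewrite !mxE big_ord1 !mxE mul1r.
  by rewrite expn0; apply: leq_trans (mxrankM_maxl _ _) _; exact: rank_leq_col.
rewrite Amp_step expnS.
apply: leq_trans (mxrank_add _ _) _.
rewrite mulSn; apply: leq_add.
  by apply: leq_trans (mxrankM_maxl _ _) IH.
apply: leq_trans (@rank_sum _ _ _ _ _ _) _.
apply: (@leq_trans (\sum_(x : point n) (#|point n|.+1) ^ t)); last first.
  by rewrite sum_nat_const.
apply: leq_sum => x _.
apply: leq_trans (mxrankM_maxl _ _) _.
by apply: leq_trans (mxrankM_maxr _ _) IH.
Qed.

Definition norm2 (v : 'cV[C]_dim) : C := \sum_i `|v i 0| ^+ 2.

Lemma norm2E (w : 'cV[C]_dim) : norm2 w = ((map_mx (fun z : C => z^*) w)^T *m w) 0 0.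
Proof. by rewrite /norm2 mxE; apply: eq_bigr => i _; rewrite !mxE normCKC. Qed.

Lemma norm2_unitary (U : 'M[C]_dim) v : unitary U -> norm2 (U *m v) = norm2 v.
Proof.
move=> hU; have hU' : (map_mx (fun z : C => z^*) U)^T *m U = 1%:M by apply: mulmx1C.
rewrite !norm2E map_mxM trmx_mul -mulmxA (mulmxA _ U) hU' mul1mx.
by [].
Qed.

Lemma xpart_qmq (c : boolfun n) (z : basis n k) : xpart (qmq_basis c z) = xpart z.
Proof.
apply/ffunP => i; rewrite !ffunE ifF //.
apply/eqP => /(congr1 val) /= hi.
by move: (ltn_ord i); rewrite hi ltnn.
Qed.

Lemma qmq_invol (c : boolfun n) : involutive (@qmq_basis n k c).
Proof.
move=> z; apply/ffunP => i; rewrite ffunE xpart_qmq ffunE.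
by case: (i == bqubit n k) => //; rewrite addbK.
Qed.

Lemma norm2_QMQ (c : boolfun n) v : norm2 (@QMQ R n k c *m v) = norm2 v.
Proof.
set s := fun i : 'I_dim => enum_rank (qmq_basis c (enum_val i)).
have ss : involutive s by move=> i; rewrite /s enum_rankK qmq_invol enum_valK.
have e : forall i, (@QMQ R n k c *m v) i 0 = v (s i) 0.
  move=> i; rewrite mxE (bigD1 (s i)) //= big1 ?addr0.
    by rewrite mxE /s enum_rankK qmq_invol eqxx mul1r.
  move=> j hj; rewrite mxE ifF ?mul0r //.
  apply/negbTE; apply: contra hj => /eqP h.
  by rewrite /s h qmq_invol enum_valK eqxx.
rewrite /norm2 (eq_bigr (fun i => `|v (s i) 0| ^+ 2)); last by move=> i _; rewrite e.
by rewrite [RHS](reindex_inj (inv_inj ss)).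
Qed.

Lemma norm2_ket0 : norm2 (@ket0 R n k) = 1.
Proof.
rewrite /norm2 (bigD1 (enum_rank ([ffun=> false] : basis n k))) //= big1.
  by rewrite mxE enum_rankK eqxx normr1 expr1n addr0.
move=> i hi; rewrite mxE ifF ?normr0 ?expr0n //.
apply/negbTE; apply: contra hi => /eqP <-; by rewrite enum_valK.
Qed.

Lemma run_norm (c : boolfun n) t : (forall s, (s <= t)%N -> unitary (Us s)) ->
  norm2 (run Us (@QMQ R n k c) t) = 1.
Proof.
elim: t => [|t IH] hU /=.
  by rewrite norm2_unitary ?norm2_ket0 //; apply: hU.
rewrite norm2_unitary; last exact: hU.
rewrite norm2_QMQ IH // => s hs; apply: hU; exact: leq_trans hs (leqnSn t).
Qed.
End QS.

Lemma hadamard_fact (C : numClosedFieldType) m p r (X : 'M[C]_(m, r)) (Y : 'M[C]_(r, p)) :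
  (\rank (\matrix_(a, b) `|(X *m Y) a b| ^+ 2) <= r * r)%N.
Proof.
have -> : \matrix_(a, b) `|(X *m Y) a b| ^+ 2 =
   (\sum_(u < r) \sum_(v < r) ((\col_a (X a u * (X a v)^*)) *m (\row_b (Y u b * (Y v b)^*))))%R.
  apply/matrixP => a b; rewrite !mxE normCK summxE.
  rewrite rmorph_sum /= mulr_suml; apply: eq_bigr => u _.
  rewrite summxE mulr_sumr; apply: eq_bigr => v _.
  rewrite !mxE big_ord1 !mxE rmorphM /=; ring.
apply: leq_trans (@rank_sum _ _ _ _ _ _) _.
rewrite -[X in (_ <= X * _)%N]card_ord -sum1_card -[X in (_ <= _ * X)%N]card_ord.
rewrite big_distrl /=.
apply: leq_sum => u _.
apply: leq_trans (@rank_sum _ _ _ _ _ _) _.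
rewrite mul1n -sum1_card; apply: leq_sum => v _.
apply: leq_trans (mxrankM_maxl _ _) _; exact: rank_leq_col.
Qed.

Lemma hadamard_rank (C : numClosedFieldType) m p (A : 'M[C]_(m, p)) :
  (\rank (\matrix_(a, b) `|A a b| ^+ 2) <= \rank A * \rank A)%N.
Proof. by have := @hadamard_fact _ _ _ _ (col_base A) (row_base A); rewrite mulmx_base. Qed.

Lemma sum_sets_binom (T : finType) (f : nat -> nat) :
  (\sum_(W : {set T}) f #|W| = \sum_(j < #|T|.+1) 'C(#|T|, j) * f j)%N.
Proof.
rewrite (partition_big (fun W : {set T} => (inord #|W| : 'I_#|T|.+1)) predT) //=.
apply: eq_bigr => j _.
have hW : forall W : {set T}, (inord #|W| == j :> 'I_#|T|.+1) = (#|W| == j).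
  move=> W; apply/eqP/eqP => [<-|h]; first by rewrite inordK // ltnS max_card.
  by apply: val_inj; rewrite /= inordK ?h // ltnS max_card.
rewrite (eq_bigr (fun _ => f j)); last by move=> W; rewrite hW => /eqP ->.
rewrite sum_nat_const; congr (_ * _)%N.
rewrite -card_draws; apply: eq_card => W; rewrite [RHS]inE; exact: hW.
Qed.

Lemma bin_sum m : (\sum_(W : {set 'I_m}) 9 ^ (m - #|W|) = 10 ^ m)%N.
Proof.
rewrite (@sum_sets_binom _ (fun j => 9 ^ (m - j))%N) card_ord.
rewrite (_ : 10 = 9 + 1)%N // expnDn.
by apply: eq_bigr => j _; rewrite exp1n muln1.
Qed.

Lemma Kbound m : (#|[set W : {set 'I_m} | 10 * #|W| <= m]| * 9 ^ m <= 10 ^ m * 9 ^ (m %/ 10))%N.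
Proof.
set q := (m %/ 10)%N.
have qm : (q <= m)%N by rewrite /q leq_div.
have -> : (9 ^ m = 9 ^ (m - q) * 9 ^ q)%N by rewrite -expnD subnK.
rewrite mulnA leq_mul2r; apply/orP; right.
rewrite -bin_sum -sum1_card big_distrl /=.
apply: (@leq_trans (\sum_(W in [set W : {set 'I_m} | 10 * #|W| <= m]) 9 ^ (m - #|W|))%N).
  apply: leq_sum => W; rewrite inE => hW; rewrite mul1n leq_pexp2l //.
  by apply: leq_sub2l; rewrite /q leq_divRL // mulnC.
by rewrite big_mkcond /=; apply: leq_sum => W _; case: ifP.
Qed.

Lemma count_close m (H : {set 'I_m}) :
  #|[set V : {set 'I_m} | (10 * #|[set i | (i \in V) != (i \in H)]| <= m)%N]| =
  #|[set W : {set 'I_m} | (10 * #|W| <= m)%N]|.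
Proof.
set f := fun V : {set 'I_m} => [set i | (i \in V) != (i \in H)].
have finv : involutive f.
  move=> V; apply/setP => i; rewrite !inE.
  by case: (i \in V); case: (i \in H).
rewrite -[RHS](card_preimset _ (inv_inj finv)); apply: eq_card => V.
by rewrite !inE.
Qed.

Section Arith.
Local Open Scope nat_scope.

Lemma core_contra (al be m X Y d e : nat) : 0 < Y -> m * Y <= X -> 0 < e -> e <= d ->
  be < al * m ^ e -> al * X ^ d <= be * Y ^ d -> False.
Proof.
move=> Y0 hXY e0 hd hb h.
have m0 : 0 < m.
  case: m hb hXY => //. by rewrite exp0n // muln0.
have h1 : al * (m * Y) ^ d <= be * Y ^ d.
  by apply: leq_trans h; rewrite leq_mul2l leq_exp2r ?hXY ?orbT // (leq_trans e0 hd).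
rewrite expnMn mulnA leq_pmul2r ?expn_gt0 ?Y0 // in h1.
have : al * m ^ e <= be by apply: leq_trans h1; rewrite leq_mul2l leq_pexp2l ?orbT.
by rewrite leqNgt hb.
Qed.

Lemma arithA_gen (x2 x3 x9 x10 d Kc : nat) : 0 < x9 -> 0 < x10 -> 2 <= d ->
  x2 * x2 ^ d <= x3 * Kc -> Kc * x9 ^ d <= x10 ^ d * x9 ^ (d %/ 10) ->
  39 * (x10 ^ 10 * x9) <= (x2 * x9) ^ 10 -> x3 ^ 10 < x2 ^ 10 * 39 ^ 2 -> False.
Proof.
move=> p9 p10 d2 h1 h2 g1 g2.
set q := d %/ 10 in h2.
have hq : q * 10 <= d by rewrite /q leq_divM.
have h3 : x2 * (x2 * x9) ^ d <= x3 * x10 ^ d * x9 ^ q.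
  rewrite expnMn mulnA.
  apply: leq_trans (_ : x3 * Kc * x9 ^ d <= _); first by rewrite leq_mul2r h1 orbT.
  by rewrite -mulnA -mulnA leq_mul2l h2 orbT.
have h4 : (x2 * (x2 * x9) ^ d) ^ 10 <= (x3 * x10 ^ d * x9 ^ q) ^ 10 by rewrite leq_exp2r.
apply: (@core_contra (x2 ^ 10) (x3 ^ 10) 39 ((x2 * x9) ^ 10) (x10 ^ 10 * x9) d 2) => //.
  by rewrite muln_gt0 expn_gt0 p10 p9.
apply: leq_trans (_ : (x2 * (x2 * x9) ^ d) ^ 10 <= _).
  by rewrite [X in _ <= X]expnMn expnAC.
apply: leq_trans h4 _.
rewrite expnMn (expnMn x3) [(_ * x9) ^ d]expnMn -mulnA.
apply: leq_mul => //; apply: leq_mul.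
  by rewrite expnAC.
by rewrite -expnM leq_pexp2l.
Qed.

Lemma arithB_gen (x2 x4 x9 x10 d Kc D : nat) : 0 < x2 -> 0 < x9 -> 0 < x10 -> 13 <= d ->
  x4 * x2 ^ d <= x9 * D * Kc -> Kc * x9 ^ d <= x10 ^ d * x9 ^ (d %/ 10) ->
  D ^ 3 <= x2 ^ d ->
  60 * (x2 ^ 10 * x10 ^ 30 * x9 ^ 3) <= (x2 * x9) ^ 30 -> x9 ^ 30 < x4 ^ 30 * 60 ^ 13 -> False.
Proof.
move=> p2 p9 p10 d13 h1 h2 hD g1 g2.
set q := d %/ 10 in h2.
have hq : q * 10 <= d by rewrite /q leq_divM.
have h3 : x4 * (x2 * x9) ^ d <= x9 * D * x10 ^ d * x9 ^ q.
  rewrite expnMn mulnA.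
  apply: leq_trans (_ : x9 * D * Kc * x9 ^ d <= _); first by rewrite leq_mul2r h1 orbT.
  by rewrite -!mulnA leq_mul2l; apply/orP; right; rewrite leq_mul2l h2 orbT.
have h4 : (x4 * (x2 * x9) ^ d) ^ 30 <= (x9 * D * x10 ^ d * x9 ^ q) ^ 30 by rewrite leq_exp2r.
apply: (@core_contra (x4 ^ 30) (x9 ^ 30) 60 ((x2 * x9) ^ 30) (x2 ^ 10 * x10 ^ 30 * x9 ^ 3) d 13) => //.
  by rewrite (muln_gt0 (x2 ^ 10 * x10 ^ 30)) (muln_gt0 (x2 ^ 10)) !expn_gt0 p10 p9 p2.
apply: leq_trans (_ : (x4 * (x2 * x9) ^ d) ^ 30 <= _).
  by rewrite [X in _ <= X]expnMn expnAC.
apply: leq_trans h4 _.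
have eR : x9 ^ 30 * (x2 ^ 10 * x10 ^ 30 * x9 ^ 3) ^ d =
    x9 ^ 30 * (x2 ^ 10) ^ d * (x10 ^ d) ^ 30 * (x9 ^ 3) ^ d.
  rewrite [(_ * x9 ^ 3) ^ d]expnMn [(x2 ^ 10 * _) ^ d]expnMn (expnAC x10 30 d).
  by rewrite !mulnA.
rewrite eR expnMn (expnMn (x9 * D)) (expnMn x9).
have eD : D ^ 30 <= (x2 ^ 10) ^ d.
  rewrite -expnM mulnC expnM (_ : 30 = 3 * 10) // expnM leq_exp2r //.
have e9 : (x9 ^ q) ^ 30 <= (x9 ^ 3) ^ d.
  rewrite -!expnM leq_pexp2l // (mulnC 3 d).
  by rewrite (_ : 30 = 10 * 3) // mulnA leq_mul2r hq orbT.
apply: leq_mul => //; apply: leq_mul => //; apply: leq_mul => //.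
Qed.

Lemma leq_expm m1 m2 e : m1 <= m2 -> m1 ^ e <= m2 ^ e.
Proof. by case: e => // e h; rewrite leq_exp2r. Qed.

Lemma D3 n T d : 0 < n -> 12 * n * T <= d -> (((2 ^ n).+1 ^ T) ^ 2) ^ 3 <= 2 ^ d.
Proof.
move=> n0 h.
have h1 : (2 ^ n).+1 <= 2 ^ (2 * n).
  rewrite mul2n -addnn expnD.
  have : 2 <= 2 ^ n by rewrite -{1}(expn1 2) leq_pexp2l.
  by move=> h2; nia.
apply: leq_trans (_ : (((2 ^ (2 * n)) ^ T) ^ 2) ^ 3 <= _).
  by apply: leq_expm; apply: leq_expm; apply: leq_expm.
rewrite -!expnM leq_pexp2l //.
by rewrite (_ : 2 * n * (T * (2 * 3)) = 12 * n * T) //; ring.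
Qed.
Lemma g1 : 39 * (10 ^ 10 * 9) <= (2 * 9) ^ 10. Proof. lia. Qed.
Lemma g2 : 3 ^ 10 < 2 ^ 10 * 39 ^ 2. Proof. lia. Qed.
Lemma g3 : 60 * (2 ^ 10 * 10 ^ 30 * 9 ^ 3) <= (2 * 9) ^ 30. Proof. lia. Qed.
Lemma g4 : 9 ^ 30 < 4 ^ 30 * 60 ^ 13. Proof. lia. Qed.

Lemma arithA d Kc : 1 <= d -> 2 * 2 ^ d <= 3 * Kc ->
  Kc * 9 ^ d <= 10 ^ d * 9 ^ (d %/ 10) -> False.
Proof.
move=> d1 h1 h2.
have [e|d2] := eqVneq d 1.
  by subst d; move: h1 h2; rewrite (_ : 1 %/ 10 = 0) // !expn1 expn0; lia.
have {}d2 : 2 <= d by rewrite ltn_neqAle eq_sym d2 d1.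
exact: (@arithA_gen 2 3 9 10 d Kc erefl erefl d2 h1 h2 g1 g2).
Qed.

Lemma arithB n T d Kc : 0 < n -> 0 < T -> 12 * n * T < d ->
  4 * 2 ^ d <= 9 * ((((2 ^ n).+1) ^ T) ^ 2) * Kc ->
  Kc * 9 ^ d <= 10 ^ d * 9 ^ (d %/ 10) -> False.
Proof.
move=> n0 T0 h h1 h2.
have d13 : 13 <= d.
  apply: leq_trans h; rewrite ltnS -(muln1 12) -mulnA leq_mul2l /=.
  by rewrite muln_gt0 n0 T0.
have hD := @D3 n T d n0 (ltnW h).
exact: (@arithB_gen 2 4 9 10 d Kc _ erefl erefl erefl d13 h1 h2 hD g3 g4).
Qed.

End Arith.

Section CS.
Variable R : realFieldType.

Lemma cauchy_schwarz (I : finType) (a b : I -> R) :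
  (\sum_i a i * b i) ^+ 2 <= (\sum_i a i ^+ 2) * (\sum_i b i ^+ 2).
Proof.
set A := \sum_i a i ^+ 2; set B := \sum_i b i ^+ 2; set X := \sum_i a i * b i.
have A0 : 0 <= A by apply: sumr_ge0 => i _; exact: sqr_ge0.
have B0 : 0 <= B by apply: sumr_ge0 => i _; exact: sqr_ge0.
have [Az|Ap] := eqVneq A 0.
  have ha : forall i, a i = 0.
    move=> i; apply/eqP; rewrite -sqrf_eq0; apply/eqP.
    by move: Az => /eqP; rewrite psumr_eq0 => [/allP/(_ i (mem_index_enum _))/implyP/(_ isT)/eqP|j _]; [|exact: sqr_ge0].
  have -> : X = 0 by rewrite /X big1 // => i _; rewrite ha mul0r.
  by rewrite expr0n /= mulr_ge0.
have Ap' : 0 < A by rewrite lt_def Ap A0.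
have H : 0 <= \sum_i (A * b i - X * a i) ^+ 2 by apply: sumr_ge0 => i _; exact: sqr_ge0.
have E : \sum_i (A * b i - X * a i) ^+ 2 = A * (A * B - X ^+ 2).
  rewrite (eq_bigr (fun i => A ^+ 2 * b i ^+ 2 - (2 * A * X) * (a i * b i) + X ^+ 2 * a i ^+ 2)); last first.
    move=> i _; ring.
  rewrite big_split /= sumrB -!mulr_sumr -/A -/B -/X; ring.
rewrite E in H.
have : 0 <= A * B - X ^+ 2 by rewrite -(pmulr_rge0 _ Ap').
by rewrite subr_ge0.
Qed.

Lemma trace_fact m r (X : 'M[R]_(m, r)) (Y : 'M[R]_(r, m)) :
  row_free X^T ->
  (\tr (X *m Y)) ^+ 2 <= r%:R * \sum_i \sum_j ((X *m Y) i j) ^+ 2.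
Proof.
move=> XTfree.
set B := X *m Y.
set G := X^T *m X.
have Gu : G \in unitmx.
  rewrite -row_free_unit; apply: inj_row_free => v Hv.
  have h1 : (v *m X^T) *m (v *m X^T)^T = 0.
    by rewrite trmx_mul trmxK !mulmxA -(mulmxA v) -/G Hv mul0mx.
  have h2 : v *m X^T = 0.
    move: h1; set w := v *m X^T; clearbody w => h1.
    apply/matrixP => i j; rewrite ord1 [RHS]mxE.
    have := congr1 (fun M : 'M[R]_1 => M 0 0) h1; rewrite [X in X = _]mxE [X in _ = X]mxE => /eqP.
    rewrite psumr_eq0; last by move=> l _; rewrite mxE -expr2 sqr_ge0.
    move=> /allP /(_ j (mem_index_enum _)) /implyP /(_ isT).
    by rewrite mxE -expr2 sqrf_eq0 => /eqP.
  by apply: (row_free_inj XTfree); rewrite h2 mul0mx.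
have GT : G^T = G by rewrite /G trmx_mul trmxK.
set P := X *m invmx G *m X^T.
have PX : P *m X = X by rewrite /P -!mulmxA -/G mulVmx // mulmx1.
have PB : P *m B = B by rewrite /B (mulmxA P X Y); congr (_ *m _); exact: PX.
have PT : P^T = P by rewrite /P !trmx_mul trmxK trmx_inv GT mulmxA.
have PP : P *m P = P by rewrite {2}/P !mulmxA; congr (_ *m _ *m _); exact: PX.
have trP : \tr P = r%:R.
  by rewrite /P mxtrace_mulC mulmxA -/G mulmxV // mxtrace1.
have sP : \sum_i \sum_j (P i j) ^+ 2 = r%:R.
  rewrite -trP (_ : \tr P = \tr (P *m P^T)); last by rewrite PT PP.
  rewrite /mxtrace.
  by apply: eq_bigr => i _; rewrite mxE; apply: eq_bigr => j _; rewrite [P^T j i]mxE expr2.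
have trB : \tr B = \sum_p (P p.1 p.2 * B p.2 p.1).
  rewrite -{1}PB /mxtrace -(pair_bigA _ (fun i j => P i j * B j i)) /=.
  by apply: eq_bigr => i _; rewrite mxE.
rewrite trB -sP.
have -> : \sum_i \sum_j B i j ^+ 2 = \sum_(p : 'I_m * 'I_m) B p.2 p.1 ^+ 2.
  by rewrite exchange_big pair_bigA.
rewrite pair_bigA /=.
exact: cauchy_schwarz.
Qed.

Lemma trace_rank m (B : 'M[R]_m) :
  (\tr B) ^+ 2 <= (\rank B)%:R * \sum_i \sum_j (B i j) ^+ 2.
Proof.
have := @trace_fact m (\rank B) (col_base B) (row_base B).
rewrite mulmx_base; apply.
by rewrite /row_free mxrank_tr; move: (col_base_full B); rewrite /row_full.
Qed.

Lemma sum_ev (T : finType) (f : T -> R) :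
  \sum_(a < #|T|) f (enum_val a) = \sum_i f i.
Proof. rewrite -(big_enum_val f). apply: eq_bigl => i. by rewrite inE. Qed.

Lemma key_bound (I Z : finType) (p : I -> Z -> R) (g : Z -> I -> R) (K : R) (r : nat) :
  (forall i z, 0 <= p i z) -> (forall i, \sum_z p i z = 1) ->
  (forall z i, 0 <= g z i <= 1) -> (forall z, \sum_i g z i <= K) ->
  (forall i, 2 / 3 <= \sum_z p i z * g z i) ->
  (\rank (\matrix_(a < #|I|, b < #|Z|) p (enum_val a) (enum_val b)) <= r)%N ->
  4 / 9 * #|I|%:R ^+ 2 <= r%:R * (#|I|%:R * K).
Proof.
move=> p0 p1 g01 gK good rk.
set Pm := \matrix_(a < #|I|, b < #|Z|) p (enum_val a) (enum_val b).
set Gm := \matrix_(b < #|Z|, a < #|I|) g (enum_val b) (enum_val a).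
set B := Pm *m Gm.
have Be : forall a a', B a a' = \sum_z p (enum_val a) z * g z (enum_val a').
  move=> a a'; rewrite mxE -(@sum_ev _ (fun z => p (enum_val a) z * g z (enum_val a'))).
  by apply: eq_bigr => b _; rewrite !mxE.
have B0 : forall a a', 0 <= B a a'.
  move=> a a'; rewrite Be; apply: sumr_ge0 => z _; apply: mulr_ge0 => //.
  by case/andP: (g01 z (enum_val a')).
have B1 : forall a a', B a a' <= 1.
  move=> a a'; rewrite Be -(p1 (enum_val a)); apply: ler_sum => z _.
  rewrite -{2}(mulr1 (p _ _)); apply: ler_wpM2l => //.
  by case/andP: (g01 z (enum_val a')).
have trB : 2 / 3 * #|I|%:R <= \tr B.
  rewrite /mxtrace (eq_bigr _ (fun a _ => Be a a)).
  rewrite (@sum_ev _ (fun i => \sum_z p i z * g z i)).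
  rewrite -[#|I|]card_ord -sum1_card natr_sum mulr_sumr.
  rewrite -(@sum_ev _ (fun i => \sum_z p i z * g z i)).
  by apply: ler_sum => a _; rewrite mulr1.
have FB : \sum_a \sum_a' B a a' ^+ 2 <= #|I|%:R * K.
  apply: (@le_trans _ _ (\sum_a \sum_a' B a a')).
    apply: ler_sum => a _; apply: ler_sum => a' _.
    by rewrite expr2 -{3}(mulr1 (B a a')); apply: ler_wpM2l; [exact: B0|exact: B1].
  apply: (@le_trans _ _ (\sum_(a < #|I|) K)); last first.
    by rewrite sumr_const card_ord mulr_natl.
  apply: ler_sum => a _.
  rewrite (eq_bigr _ (fun a' _ => Be a a')).
  rewrite (@sum_ev _ (fun i' => \sum_z p (enum_val a) z * g z i')).
  rewrite exchange_big /=.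
  apply: (@le_trans _ _ (\sum_z p (enum_val a) z * K)).
    apply: ler_sum => z _; rewrite -mulr_sumr; apply: ler_wpM2l => //.
  by rewrite -mulr_suml p1 mul1r.
have rB : (\rank B <= r)%N by apply: leq_trans (mxrankM_maxl _ _) rk.
have := @trace_rank _ B.
move=> h.
have h2 : (2 / 3 * #|I|%:R) ^+ 2 <= (\rank B)%:R * \sum_a \sum_a' B a a' ^+ 2.
  apply: (le_trans _ h); rewrite ler_sqr //.
    by rewrite nnegrE; apply: mulr_ge0; [apply: divr_ge0|].
  by rewrite nnegrE; apply: le_trans trB; apply: mulr_ge0; [apply: divr_ge0|].
have h3 : (\rank B)%:R * \sum_a \sum_a' B a a' ^+ 2 <= r%:R * (#|I|%:R * K).
  apply: ler_pM => //.
    apply: sumr_ge0 => a _; apply: sumr_ge0 => a' _; exact: sqr_ge0.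
  by rewrite ler_nat.
have := le_trans h2 h3.
have -> : (2 / 3 * #|I|%:R) ^+ 2 = 4 / 9 * #|I|%:R ^+ 2 :> R.
  by rewrite exprMn; congr (_ * _); rewrite expr_div_n; congr (_ / _); rewrite -natrX.
done.
Qed.
End CS.



Lemma frac_le (R : realFieldType) (a m : nat) : (0 < m)%N ->
  ((a%:R / m%:R : R) <= 1 / 10) = (10 * a <= m)%N.
Proof.
move=> m0; rewrite ler_pdivrMr ?ltr0n // mul1r mulrC ler_pdivlMr ?ltr0n //.
by rewrite -natrM ler_nat mulnC.
Qed.

Lemma const_bound (R : realFieldType) (I Z : finType) (p : Z -> R) (g : Z -> I -> R) (K : R) :
  (forall z, 0 <= p z) -> (forall z, \sum_i g z i <= K) ->
  (forall i, 2 / 3 <= \sum_z p z * g z i) -> \sum_z p z = 1 ->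
  2 / 3 * #|I|%:R <= K.
Proof.
move=> p0 gK good p1.
apply: (@le_trans _ _ (\sum_(i : I) \sum_z p z * g z i)).
  rewrite -sum1_card natr_sum mulr_sumr; apply: ler_sum => i _; by rewrite mulr1.
rewrite exchange_big /=.
apply: (@le_trans _ _ (\sum_z p z * K)).
  by apply: ler_sum => z _; rewrite -mulr_sumr; apply: ler_wpM2l.
by rewrite -mulr_suml p1 mul1r.
Qed.

Lemma card_enum (T : finType) (S : {set T}) (P : pred T) :
  #|[set x in S | P x]| = #|[set i : 'I_#|S| | P (enum_val i)]|.
Proof.
rewrite -!sum1_card.
have e1 : (\sum_(x in [set x in S | P x]) 1 = \sum_(x in S) (P x : nat))%N.
  rewrite big_mkcond [RHS]big_mkcond; apply: eq_bigr => x _; rewrite inE.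
  by case: (x \in S); case: (P x).
rewrite e1 (big_enum_val (fun x => (P x : nat))) [RHS]big_mkcond /=.
by apply: eq_bigr => i _; rewrite inE; case: (P _).
Qed.

Lemma card_setT (T : finType) : #|{set T}| = (2 ^ #|T|)%N.
Proof. by have := card_powerset [set: T]; rewrite powersetT !cardsT. Qed.


Lemma numA (R : realFieldType) (x K : nat) : 2 / 3 * x%:R <= K%:R :> R -> (2 * x <= 3 * K)%N.
Proof. move=> h; rewrite -(ler_nat R) natrM [X in _ <= X]natrM; lra. Qed.
Lemma numB (R : realFieldType) (x D K : nat) : (0 < x)%N ->
  4 / 9 * x%:R ^+ 2 <= D%:R * (x%:R * K%:R) :> R -> (4 * x <= 9 * D * K)%N.
Proof.
move=> x0 h; rewrite -(ler_nat R) natrM [X in _ <= X]natrM [X in _ <= X * _]natrM.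
have hx : 0 < x%:R :> R by rewrite ltr0n.
nra.
Qed.

Lemma sqnormE (R : rcfType) (x : R[i]) : `|x| ^+ 2 = (((complex.Re x) ^+ 2 + (complex.Im x) ^+ 2)%:C)%C.
Proof. by rewrite add_Re2_Im2. Qed.

Theorem mainTheorem10 (R : realType) (n : nat) (C : {set boolfun n})
  (S : {set point n}) (d : nat) (k : nat)
  (Us : nat -> 'M[R[i]]_(dimH n k)) (T : nat)
  (M : {set 'I_(qreg n k)}) (decode : basis n k -> option (boolfun n)) :
  #|S| = d ->
  shattered C S ->
  (forall t, (t <= T)%N -> unitary (Us t)) ->
  (forall c, c \in C ->
     success_prob Us T M decode (@QMQ R n k c)
       (fun h => rel_dist R S h c <= 1 / 10) >= 2%:R / 3%:R) ->
  (T%:R : R) >= d%:R / (12 * n)%:R.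
Proof.
move=> Hd Hsh Hunit Hsucc; subst d.
have [n0|npos] := posnP n.
  by subst n; rewrite muln0 invr0 mulr0 ler0n.
suff hle : (#|S| <= 12 * n * T)%N.
  rewrite ler_pdivrMr ?ltr0n ?muln_gt0 ?npos //.
  by rewrite -natrM ler_nat mulnC.
rewrite leqNgt; apply/negP => hlt.
have m0 : (0 < #|S|)%N by apply: leq_ltn_trans hlt.
pose sg (i : 'I_#|S|) : point n := enum_val i.
have sg_inj : injective sg := @enum_val_inj _ _.
have ex : forall U : {set 'I_#|S|}, exists c, (c \in C) && ([set x in S | c x] == sg @: U).
  move=> U; have sub : sg @: U \subset S.
    by apply/subsetP => x /imsetP [i _ ->]; exact: enum_valP.
  have [c cC ce] := Hsh _ sub.
  by exists c; rewrite cC ce eqxx.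
pose cf U := xchoose (ex U).
have cfC : forall U, cf U \in C by move=> U; case/andP: (xchooseP (ex U)).
have cfS : forall U, [set x in S | cf U x] = sg @: U.
  by move=> U; case/andP: (xchooseP (ex U)) => _ /eqP.
have cf_sg : forall U i, cf U (sg i) = (i \in U).
  move=> U i; have := congr1 (fun A : {set point n} => sg i \in A) (cfS U).
  by rewrite /= inE (mem_imset _ _ sg_inj) enum_valP.
have dist : forall (h : boolfun n) U,
    #|[set x in S | h x != cf U x]| = #|[set i | (i \in U) != (i \in [set j | h (sg j)])]|.
  move=> h U; rewrite card_enum; apply: eq_card => i; rewrite !inE.
  by rewrite -/(sg i) cf_sg eq_sym.
pose good (h : boolfun n) U := rel_dist R S h (cf U) <= 1 / 10.
have goodE : forall h U, good h U =
    (10 * #|[set i | (i \in U) != (i \in [set j | h (sg j)])]| <= #|S|)%N.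
  by move=> h U; rewrite /good /rel_dist dist frac_le.
pose g (z : basis n k) (U : {set 'I_#|S|}) : R :=
  if decode (outcome M z) is Some h then (good h U)%:R else 0.
pose Kc := #|[set W : {set 'I_#|S|} | (10 * #|W| <= #|S|)%N]|.
have g01 : forall z U, 0 <= g z U <= 1.
  move=> z U; rewrite /g; case: (decode _) => [h|]; last by rewrite lexx ler01.
  by case: (good h U); rewrite ?lexx ?ler01.
have gK : forall z, \sum_U g z U <= Kc%:R.
  move=> z; rewrite /g; case: (decode _) => [h|]; last by rewrite big1 // ler0n.
  rewrite -natr_sum ler_nat /Kc -(@count_close _ [set j | h (sg j)]).
  set P := fun V : {set 'I_#|S|} =>
    (10 * #|[set i | (i \in V) != (i \in [set j | h (sg j)])]| <= #|S|)%N.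
  have e : #|[set V | P V]| = (\sum_V (P V : nat))%N.
    rewrite -sum1_card big_mkcond; apply: eq_bigr => V _; rewrite inE.
    by case: (P V).
  rewrite e; apply: eq_leq; apply: eq_bigr => U _.
  by rewrite goodE.
pose amp U (z : basis n k) := run Us (@QMQ R n k (cf U)) T (bidx z) 0.
pose p U z : R := (complex.Re (amp U z)) ^+ 2 + (complex.Im (amp U z)) ^+ 2.
have p0 : forall U z, 0 <= p U z by move=> U z; rewrite addr_ge0 ?sqr_ge0.
have p1 : forall U, \sum_z p U z = 1.
  move=> U; have hn := @run_norm R n k Us (cf U) T Hunit.
  rewrite /norm2 (eq_bigr _ (fun i _ => sqnormE _ _)) -rmorph_sum -(rmorph1 (real_complex R)) in hn.
  have {}hn := complexI hn.
  rewrite -[RHS]hn -(@sum_ev R (basis n k)).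
  by apply: eq_bigr => i _; rewrite /p /amp /bidx enum_valK.
have succ : forall U, 2 / 3 <= \sum_z p U z * g z U.
  move=> U; have := Hsucc (cf U) (cfC U).
  rewrite /success_prob.
  have -> : (2 / 3 : R[i]) = ((2 / 3 : R)%:C)%C by rewrite fmorph_div !rmorph_nat.
  rewrite (_ : \sum_z _ = ((\sum_z p U z * g z U)%:C)%C); first by rewrite lecR.
  rewrite rmorph_sum; apply: eq_bigr => z _; rewrite /g.
  case: (decode _) => [h|]; last by rewrite mulr0 rmorph0.
  rewrite -/(good h U); case: (good h U); last by rewrite mulr0 rmorph0.
  by rewrite mulr1 sqnormE.
pose cs (a : 'I_#|{set 'I_#|S|}|) := cf (enum_val a).
have rk : (\rank (\matrix_(a < #|{set 'I_#|S|}|, b < #|basis n k|) p (enum_val a) (enum_val b))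
    <= ((2 ^ n).+1 ^ T) ^ 2)%N.
  rewrite -(mxrank_map (real_complex R)).
  have -> : map_mx (real_complex R)
      (\matrix_(a < #|{set 'I_#|S|}|, b < #|basis n k|) p (enum_val a) (enum_val b))
      = \matrix_(a, b) `|@Amp R n k Us _ cs T a b| ^+ 2.
    by apply/matrixP => a b; rewrite !mxE sqnormE /p /amp /bidx enum_valK.
  apply: leq_trans (@hadamard_rank _ _ _ _) _.
  have := @Amp_rank R n k Us _ cs T.
  rewrite card_ffun card_bool card_ord => h.
  by rewrite (expnS _ 1) expn1; by apply: leq_mul.
have [T0|Tpos] := posnP T.
  subst T.
  pose pc z : R := p set0 z.
  have pc_eq : forall U z, p U z = pc z by move=> U z; rewrite /pc /p /amp /=.
  have := @const_bound R {set 'I_#|S|} (basis n k) pc g Kc%:R (p0 set0) gK _ (p1 set0).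
  move=> h; have {}h : 2 / 3 * #|{set 'I_#|S|}|%:R <= Kc%:R :> R.
    apply: h => U; rewrite (eq_bigr (fun z => p U z * g z U)) ?succ //.
  rewrite card_setT card_ord in h.
  have h' : (2 * 2 ^ #|S| <= 3 * Kc)%N by exact: (@numA R _ _ h).
  exact: (@arithA #|S| Kc m0 h' (Kbound #|S|)).
have := @key_bound R {set 'I_#|S|} (basis n k) p g Kc%:R _ p0 p1 g01 gK succ rk.
rewrite card_setT card_ord => h.
have h' : (4 * 2 ^ #|S| <= 9 * (((2 ^ n).+1 ^ T) ^ 2) * Kc)%N.
  by apply: (@numB R _ _ _ _ h); rewrite expn_gt0.
exact: (@arithB n T #|S| Kc npos Tpos hlt h' (Kbound _)).
Qed.
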